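(* Let $(X,m)$ be a $\sigma$-finite measure space and let $Q$ with domain $\mathcal D$ and $Q^\#$ with domain $\mathcal D^\#$ be Dirichlet forms on $L^2(X,m)$ such that $\mathcal D\subseteq\mathcal D^\#$ and $Q^\#=Q$ on $\mathcal D\times\mathcal D$. Then the following are equivalent: (i) $\mathcal D=\mathcal D^\#$; (ii) there is no nontrivial $u\in D(L')$ with $L'u=-u$.
   Context: A Dirichlet form on $L^2(X,m)$ is a densely defined, nonnegative, closed, symmetric bilinear form satisfying the contraction property. $\langle\cdot,\cdot\rangle$ denotes the $L^2(X,m)$ inner product. The operator $L'$ has domain $D(L')=\{u\in\mathcal D^\#\mid \exists w\in L^2(X,m)\text{ with } Q^\#(u,v)=\langle w,v\rangle\text{ for all }v\in\mathcal D\}$ and acts by $L'u=w$. *)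

(* Defs.v *)
From HB Require Import structures.
From mathcomp Require Import all_boot all_order all_algebra.
From mathcomp Require Import all_classical all_reals all_analysis.
Set Implicit Arguments. Unset Strict Implicit. Unset Printing Implicit Defensive.
Import Order.TTheory GRing.Theory Num.Theory.
Local Open Scope classical_set_scope.
Local Open Scope ring_scope.

(* Elements of L^2(X,m) are represented by real functions f with
   f \in Lfun mu 2 (measurable, finite L^2 norm); equality in L^2 is
   a.e. equality.  A (possibly unbounded) form on L^2 is given by a domain
   D : set (T -> R) and a map Q : (T -> R) -> (T -> R) -> R, required to be
   compatible with a.e. equality. *)

Section DirichletForms.
Context d (T : measurableType d) (R : realType).
Variable mu : {measure set T -> \bar R}.

Definition L2 (f : T -> R) : Prop := f \in Lfun mu 2%E.

Definition ip (f g : T -> R) : R := Rintegral mu setT (fun x => f x * g x).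

Definition nsq (f : T -> R) : R := ip f f.

Definition diff (f g : T -> R) : T -> R := fun x => f x - g x.

Definition unit_contraction (u : T -> R) : T -> R :=
  fun x => Num.min (Num.max (u x) 0) 1.

Definition is_Dirichlet_form (D : set (T -> R)) (Q : (T -> R) -> (T -> R) -> R)
  : Prop :=
  [/\
    [/\ (* D is a subset of L^2, saturated under a.e. equality, and Q only
       depends on a.e. classes (i.e. this is a form on L^2 classes) *)
    (forall u, D u -> L2 u),
    (forall u v, D u -> L2 v -> u = v %[ae mu] -> D v)
    & (forall u u' v v', D u -> D u' -> D v -> D v' ->
        u = u' %[ae mu] -> v = v' %[ae mu] -> Q u v = Q u' v')],
    D (fun=> 0) /\
    (forall (a : R) u v, D u -> D v -> D (fun x => a * u x + v x)),
    (forall f, L2 f -> forall eps : R, 0 < eps ->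
        exists2 g, D g & nsq (diff f g) < eps) &
    [/\
      (forall u v, D u -> D v -> Q u v = Q v u),
      (forall (a : R) u v w, D u -> D v -> D w ->
          Q (fun x => a * u x + v x) w = a * Q u w + Q v w),
      (forall u, D u -> 0 <= Q u u),
      (forall u : nat -> T -> R, (forall n, D (u n)) ->
        (forall eps : R, 0 < eps -> exists N, forall n m, (N <= n)%N -> (N <= m)%N ->
            Q (diff (u n) (u m)) (diff (u n) (u m)) + nsq (diff (u n) (u m)) < eps) ->
        exists2 v, D v &
          (forall eps : R, 0 < eps -> exists N, forall n, (N <= n)%N ->
            Q (diff (u n) v) (diff (u n) v) + nsq (diff (u n) v) < eps)) &
      (forall u, D u -> D (unit_contraction u) /\
          Q (unit_contraction u) (unit_contraction u) <= Q u u)]].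

(* The operator L' : graph relation  "u \in D(L') and L'u = w", i.e.
   u \in D^#, w \in L^2 and Q^#(u,v) = <w,v> for all v \in D. *)
Definition Lprime (D Dsharp : set (T -> R)) (Qsharp : (T -> R) -> (T -> R) -> R)
    (u w : T -> R) : Prop :=
  [/\ Dsharp u, L2 w & forall v, D v -> Qsharp u v = ip w v].

End DirichletForms.

(* Main.v *)
Require Import Defs.
From HB Require Import structures.
From mathcomp Require Import all_boot all_order all_algebra.
From mathcomp Require Import all_classical all_reals all_analysis.
From mathcomp Require Import ring lra.
Import Order.TTheory GRing.Theory Num.Theory.
Local Open Scope classical_set_scope.
Local Open Scope ring_scope.

Section Ip.
Context d (T : measurableType d) (R : realType).
Variable mu : {measure set T -> \bar R}.

Lemma L2_int {f g : T -> R} : L2 mu f -> L2 mu g ->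
  mu.-integrable setT (EFin \o (fun x => f x * g x)).
Proof.
move=> hf hg; apply/Lfun1_integrable; exact: Lfun2_mul_Lfun1.
Qed.

Lemma ipC (f g : T -> R) : ip mu f g = ip mu g f.
Proof. by rewrite /ip; apply: eq_Rintegral => x _; rewrite mulrC. Qed.

Lemma ipD (a : R) (u v w : T -> R) : L2 mu u -> L2 mu v -> L2 mu w ->
  ip mu (fun x => a * u x + v x) w = a * ip mu u w + ip mu v w.
Proof.
move=> hu hv hw; rewrite /ip.
rewrite (@eq_Rintegral _ _ _ _ _ (fun x => a * (u x * w x) + v x * w x)); last first.
  by move=> x _; rewrite mulrDl mulrA.
rewrite RintegralD //; last exact: L2_int.
  by rewrite RintegralZl //; exact: L2_int.
have := L2_int hu hw => /(integrableZl measurableT a).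
apply: eq_integrable => // x _ /=; by rewrite EFinM.
Qed.

Lemma nsq_ge0 (f : T -> R) : 0 <= nsq mu f.
Proof. by apply: Rintegral_ge0 => x _; rewrite -expr2 sqr_ge0. Qed.

Lemma nsq0 (f : T -> R) : L2 mu f -> nsq mu f = 0 -> f = (fun=> 0) %[ae mu].
Proof.
move=> hf h0.
set g : T -> R := fun x => f x * f x.
have hi : mu.-integrable setT (EFin \o g) := L2_int hf hf.
have fin := integrable_fin_num measurableT hi.
have e0 : (\int[mu]_(x in setT) `|(EFin \o g) x|)%E = 0%E.
  transitivity (\int[mu]_(x in setT) (EFin \o g) x)%E.
    by apply: eq_integral => x _ /=; rewrite ger0_norm // /g -expr2 sqr_ge0.
  by rewrite -(fineK fin); move: h0; rewrite /nsq /ip /Rintegral => ->.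
case/integrableP: (hi) => mi _.
have := (ae_eq_integral_abs mu measurableT mi).1 e0.
apply: filterS => x /= h _; have := h I; move/eqP; rewrite eqe /g mulf_eq0 orbb => /eqP //.
Qed.

Lemma ip0 (w : T -> R) : L2 mu (fun=> 0) -> L2 mu w -> ip mu (fun=> 0) w = 0.
Proof.
move=> h0 hw.
have h : ip mu (fun=> 0) w = 1 * ip mu (fun=> 0) w + ip mu (fun=> 0) w.
  rewrite -(ipD 1 _ _ _ h0 h0 hw); congr ip; apply/funext => x /=; by rewrite mul1r addr0.
lra.
Qed.

Lemma ipN (u w : T -> R) : L2 mu (fun=> 0) -> L2 mu u -> L2 mu w ->
  ip mu (fun x => - u x) w = - ip mu u w.
Proof.
move=> h0 hu hw.
have h : ip mu (fun x => - u x) w = -1 * ip mu u w + ip mu (fun=> 0) w.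
  rewrite -(ipD (-1) _ _ _ hu h0 hw); congr ip; apply/funext => x /=; by rewrite addr0 mulN1r.
by rewrite h ip0 // addr0 mulN1r.
Qed.
End Ip.

Lemma small_inv (R : realType) (eps : R) : 0 < eps ->
  exists N, forall n, (N <= n)%N -> n.+1%:R^-1 < eps.
Proof.
move=> e0; exists (Num.truncn eps^-1) => n hn.
have h1 := truncnS_gt eps^-1.
have h2 : eps^-1 < n.+1%:R.
  by apply: (lt_le_trans h1); rewrite ler_nat ltnS.
rewrite -[eps]invrK ltf_pV2 // ?posrE ?invr_gt0 //.
Qed.

Definition lc {T : Type} {R : realType} (a : R) (u v : T -> R) : T -> R :=
  fun x => a * u x + v x.
Definition dif {T : Type} {R : realType} (u v : T -> R) : T -> R :=
  fun x => u x - v x.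

Section Abs.
Context (T : Type) (R : realType) (S Dd : set (T -> R))
  (B : (T -> R) -> (T -> R) -> R).
Context (hS0 : S (fun=> 0))
  (hSl : forall a u v, S u -> S v -> S (lc a u v))
  (hDS : Dd `<=` S) (hD0 : Dd (fun=> 0))
  (hDl : forall a u v, Dd u -> Dd v -> Dd (lc a u v))
  (hC : forall u v, S u -> S v -> B u v = B v u)
  (hL : forall a u v w, S u -> S v -> S w -> B (lc a u v) w = a * B u w + B v w)
  (hP : forall u, S u -> 0 <= B u u).

Lemma Sdif u v : S u -> S v -> S (dif u v).
Proof.
move=> hu hv; have -> : dif u v = lc (-1) v u.
  by apply/funext => x; rewrite /dif /lc; ring.
exact: hSl.
Qed.

Lemma B0l w : S w -> B (fun=> 0) w = 0.
Proof.
move=> hw; have e : (fun=> 0) = lc 1 (fun=> 0) (fun=> 0) :> (T -> R).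
  by apply/funext => x; rewrite /lc; ring.
have := hL 1 _ _ _ hS0 hS0 hw; rewrite -e => h; lra.
Qed.

Lemma B0r w : S w -> B w (fun=> 0) = 0.
Proof. by move=> hw; rewrite hC // B0l. Qed.

Lemma Br a u v w : S u -> S v -> S w -> B w (lc a u v) = a * B w u + B w v.
Proof.
move=> hu hv hw; rewrite hC ?hL ?(hC _ _ hu) ?(hC _ _ hv) //; exact: hSl.
Qed.

Lemma expand3 a b c u v w : S u -> S v -> S w ->
  B (lc a u (lc b v (lc c w (fun=> 0)))) (lc a u (lc b v (lc c w (fun=> 0)))) =
  a^+2 * B u u + b^+2 * B v v + c^+2 * B w w + 2 * a * b * B u v
  + 2 * a * c * B u w + 2 * b * c * B v w.
Proof.
move=> hu hv hw.
have h3 := hSl c _ _ hw hS0. have h2 := hSl b _ _ hv h3. have h1 := hSl a _ _ hu h2.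
rewrite hL // hL // hL // B0l //.
rewrite !Br // !B0r // (hC _ _ hv hu) (hC _ _ hw hu) (hC _ _ hw hv).
ring.
Qed.


Context (hcomp : forall u : nat -> T -> R, (forall n, Dd (u n)) ->
  (forall eps : R, 0 < eps -> exists N, forall n m, (N <= n)%N -> (N <= m)%N ->
     B (dif (u n) (u m)) (dif (u n) (u m)) < eps) ->
  exists2 v, Dd v & (forall eps : R, 0 < eps -> exists N, forall n, (N <= n)%N ->
     B (dif (u n) v) (dif (u n) v) < eps)).

Lemma Dlc3 a b c u v w : Dd u -> Dd v -> Dd w -> Dd (lc a u (lc b v (lc c w (fun=> 0)))).
Proof. by move=> *; do 3 apply: hDl => //. Qed.

Lemma Slc3 a b c u v w : S u -> S v -> S w -> S (lc a u (lc b v (lc c w (fun=> 0)))).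
Proof. by move=> *; do 3 apply: hSl => //. Qed.

Lemma proj w : S w -> exists2 v, Dd v & forall z, Dd z -> B (dif w v) z = 0.
Proof.
move=> hw.
pose A := [set r | exists2 v, Dd v & r = B (dif w v) (dif w v)].
have hlb : has_lbound A.
  by exists 0 => r [v hv ->]; apply: hP; apply: Sdif => //; exact: hDS.
have hne : A !=set0 by exists (B (dif w (fun=> 0)) (dif w (fun=> 0))); exists (fun=> 0).
have hlow : forall v, Dd v -> inf A <= B (dif w v) (dif w v).
  by move=> v hv; apply: (ge_inf hlb); exists v.
pose i := fun k : nat => (k.+1%:R : R)^-1.
have hseq : forall n : nat, exists v, Dd v /\ B (dif w v) (dif w v) < inf A + i n.
  move=> n; have hpos : 0 < i n by rewrite /i invr_gt0 ltr0Sn.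
  by have [r [v hv ->] hr] := inf_adherent hpos (conj hne hlb); exists v.
have [vs hvs] := choice hseq.
have hvD : forall n, Dd (vs n) by move=> n; have [] := hvs n.
have hvS : forall n, S (vs n) by move=> n; apply: hDS.
have hcau : forall n m, B (dif (vs n) (vs m)) (dif (vs n) (vs m)) <=
    2 * i n + 2 * i m.
  move=> n m; have [_ hn] := hvs n; have [_ hm] := hvs m.
  have := hlow _ (Dlc3 (1/2) (1/2) 0 _ _ _ (hvD n) (hvD m) hD0).
  have -> : dif w (lc (1/2) (vs n) (lc (1/2) (vs m) (lc 0 (fun=> 0) (fun=> 0))))
     = lc 1 w (lc (-1/2) (vs n) (lc (-1/2) (vs m) (fun=> 0))).
    by apply/funext => x; rewrite /lc /dif; ring.
  have E1 : dif w (vs n) = lc 1 w (lc (-1) (vs n) (lc 0 (vs m) (fun=> 0))).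
    by apply/funext => x; rewrite /lc /dif; ring.
  rewrite E1 in hn.
  have E2 : dif w (vs m) = lc 1 w (lc 0 (vs n) (lc (-1) (vs m) (fun=> 0))).
    by apply/funext => x; rewrite /lc /dif; ring.
  rewrite E2 in hm.
  have -> : dif (vs n) (vs m) = lc 0 w (lc 1 (vs n) (lc (-1) (vs m) (fun=> 0))).
    by apply/funext => x; rewrite /lc /dif; ring.
  rewrite !expand3 // in hn hm *.
  move=> hmid; lra.
have [v hv hconv] : exists2 v, Dd v & (forall eps : R, 0 < eps -> exists N, forall n, (N <= n)%N ->
     B (dif (vs n) v) (dif (vs n) v) < eps).
  apply: hcomp => // eps he.
  have he4 : 0 < eps / 4 by rewrite divr_gt0.
  have [N hN] := small_inv _ _ he4; exists N => n m hn hm.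
  apply: (le_lt_trans (hcau n m)); have h1 : i n < eps / 4 := hN n hn; have h2 : i m < eps / 4 := hN m hm; lra.
exists v => // z hz.
have hSv : S v by apply: hDS.
have hSz : S z by apply: hDS.
set u := dif w v.
have hSu : S u by apply: Sdif.
set c := B u z.
have [//|hc0] := eqVneq c 0; exfalso.
set e := B z z.
have he : 0 <= e by apply: hP.
set s := c / (2 * e + 1).
have he1 : 0 < 2 * e + 1 by lra.
have hc2 : 0 < c ^+ 2 by rewrite exprn_even_gt0.
set eta := 2 * s * c - 2 * s ^+ 2 * e.
have heta : 0 < eta.
  have -> : eta = 2 * c ^+ 2 * (e + 1) / (2 * e + 1) ^+ 2.
    rewrite /eta /s; field; lra.
  apply: divr_gt0; last exact: exprn_gt0.
  by apply: mulr_gt0; [lra|lra].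
have heta2 : 0 < eta / 2 by lra.
have [N1 hN1] := hconv _ heta2.
have [N2 hN2] := small_inv _ _ heta2.
pose n := maxn N1 N2.
have h4 := hN1 n (leq_maxl _ _).
have h5 : i n < eta / 2 := hN2 n (leq_maxr _ _).
have [_ h2] := hvs n.
have h1 := hlow _ (hDl s _ _ hz (hvD n)).
set p := dif v (vs n).
have hSp : S p by apply: Sdif.
have h3 := hP _ (Slc3 0 1 s _ _ _ hSu hSp hSz).
have E3 : dif w (lc s z (vs n)) = lc 1 u (lc 1 p (lc (- s) z (fun=> 0))).
  by apply/funext => x; rewrite /u /p /lc /dif /=; ring.
rewrite E3 in h1.
have E4 : dif w (vs n) = lc 1 u (lc 1 p (lc 0 z (fun=> 0))).
  by apply/funext => x; rewrite /u /p /lc /dif /=; ring.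
rewrite E4 in h2.
have E5 : dif (vs n) v = lc 0 u (lc (-1) p (lc 0 z (fun=> 0))).
  by apply/funext => x; rewrite /u /p /lc /dif /=; ring.
rewrite E5 in h4.
rewrite !expand3 // in h1 h2 h3 h4.
rewrite -/c -/e in h1 h2 h3 h4.
have heq : eta = 2 * s * c - 2 * s ^+ 2 * e by []. lra.
Qed.

End Abs.

Theorem mainTheorem2 (d : measure_display) (T : measurableType d) (R : realType)
    (mu : {measure set T -> \bar R}) (mu_sfin : sigma_finite setT mu)
    (D Dsharp : set (T -> R)) (Q Qsharp : (T -> R) -> (T -> R) -> R)
    (hQ : is_Dirichlet_form mu D Q) (hQsharp : is_Dirichlet_form mu Dsharp Qsharp)
    (hsub : D `<=` Dsharp)
    (hagree : forall u v, D u -> D v -> Qsharp u v = Q u v) :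
  D = Dsharp <->
  ~ (exists u : T -> R,
       ~ (u = (fun=> 0) %[ae mu]) /\ Lprime mu D Dsharp Qsharp u (fun x => - u x)).
Proof.
case: (hQ) => [[DL2 Dsat _] [D0 Dlin] _ [QC QL QP Qcl _]].
case: (hQsharp) => [[SL2 _ _] [S0 Slin] _ [QsC QsL QsP _ _]].
have L20 : L2 mu (fun=> 0) by apply: SL2.
split.
- move=> eqD [u [hnz [hu hL2 hort]]].
  have Du : D u by rewrite eqD.
  have h := hort u Du.
  rewrite ipN // in h; try exact: SL2.
  have h1 := QsP u hu.
  have h2 := @nsq_ge0 _ _ _ mu u.
  have h3 : nsq mu u = 0 by move: h2; rewrite /nsq => h2; lra.
  by apply: hnz; exact: (@nsq0 _ _ _ mu u (SL2 _ hu) h3).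
- move=> hno.
  pose B := fun f g => Qsharp f g + ip mu f g.
  have hSl : forall a u v, Dsharp u -> Dsharp v -> Dsharp (lc a u v).
    by move=> a u v hu hv; apply: Slin.
  have hDl : forall a u v, D u -> D v -> D (lc a u v).
    by move=> a u v hu hv; apply: Dlin.
  have hdifD : forall a b, D a -> D b -> D (Defs.diff a b).
    move=> a b ha hb; have -> : Defs.diff a b = lc (-1) b a.
      by apply/funext => x; rewrite /lc /Defs.diff; ring.
    exact: hDl.
  have hC : forall u v, Dsharp u -> Dsharp v -> B u v = B v u.
    by move=> u v hu hv; rewrite /B QsC // ipC.
  have hL : forall a u v w, Dsharp u -> Dsharp v -> Dsharp w ->
      B (lc a u v) w = a * B u w + B v w.
    move=> a u v w hu hv hw; rewrite /B /lc QsL // ipD //; try exact: SL2.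
    ring.
  have hP : forall u, Dsharp u -> 0 <= B u u.
    by move=> u hu; rewrite /B; apply: addr_ge0; [exact: QsP | exact: nsq_ge0].
  have hcomp : forall u : nat -> T -> R, (forall n, D (u n)) ->
    (forall eps : R, 0 < eps -> exists N, forall n m, (N <= n)%N -> (N <= m)%N ->
       B (dif (u n) (u m)) (dif (u n) (u m)) < eps) ->
    exists2 v, D v & (forall eps : R, 0 < eps -> exists N, forall n, (N <= n)%N ->
       B (dif (u n) v) (dif (u n) v) < eps).
    move=> u hu hcau.
    have hc : forall eps : R, 0 < eps -> exists N, forall n m, (N <= n)%N -> (N <= m)%N ->
        Q (Defs.diff (u n) (u m)) (Defs.diff (u n) (u m)) + nsq mu (Defs.diff (u n) (u m)) < eps.
      move=> eps he; have [N hN] := hcau eps he; exists N => n m hn hm.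
      have := hN n m hn hm; rewrite /B -(hagree _ _ (hdifD _ _ (hu n) (hu m)) (hdifD _ _ (hu n) (hu m))).
      by [].
    have [v hv hconv] := Qcl u hu hc.
    exists v => // eps he; have [N hN] := hconv eps he; exists N => n hn.
    have := hN n hn; rewrite /B -(hagree _ _ (hdifD _ _ (hu n) hv) (hdifD _ _ (hu n) hv)).
    by [].
  apply/seteqP; split => // w hw.
  have [v hv horth] := @proj _ _ Dsharp D B S0 hSl hsub D0 hDl hC hL hP hcomp w hw.
  have hSv : Dsharp v by apply: hsub.
  have hSu : Dsharp (dif w v) := @Sdif _ _ Dsharp hSl w v hw hSv.
  have hL2N : L2 mu (fun x => - dif w v x).
    apply: SL2; have -> : (fun x => - dif w v x) = lc (-1) (dif w v) (fun=> 0).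
      by apply/funext => x; rewrite /lc; ring.
    exact: hSl.
  have hz : dif w v = (fun=> 0) %[ae mu].
    apply: contrapT => hnz; apply: hno; exists (dif w v); split => //.
    split => // z hz.
    have := horth z hz; rewrite /B ipN //; try exact: SL2; try (apply: SL2; exact: hsub).
    lra.
  apply: (Dsat v w hv (SL2 _ hw)).
  by apply: filterS hz => x h hx; have := h hx; rewrite /dif => /eqP; rewrite subr_eq0 => /eqP.
Qed.
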